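(* Let $\mu\in(0,1)$. For any $t_{\rm r}>0$, the equation $$\Big(\mu t_{\rm r}+\sqrt{1+t_{\rm r}^2-2t_{\rm r}\cos\theta}\Big)\cos\theta-\mu=0$$ has a unique solution $\theta=\theta_{\rm exit}$ in the interval $[\cos^{-1}\mu,\ \tfrac{\pi}{2}]$. Furthermore, $\theta_{\rm exit}\to\tfrac{\pi}{2}$ as $t_{\rm r}\to\infty$. *)

(* Defs.v *)
From Stdlib Require Import Reals.
Open Scope R_scope.

Definition exit_eq (mu t th : R) : R :=
  (mu * t + sqrt (1 + t ^ 2 - 2 * t * cos th)) * cos th - mu.

(* Main.v *)
Require Import Defs.
From Stdlib Require Import Reals.
From Stdlib Require Import Lra Psatz.
Open Scope R_scope.

Definition Pc (mu t c : R) : R :=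
  (-2 * t) * c ^ 3 + (1 + t ^ 2 - mu ^ 2 * t ^ 2) * c ^ 2 + (2 * mu ^ 2 * t) * c - mu ^ 2.

Lemma Pc_id (mu t c : R) :
  Pc mu t c = c ^ 2 * (1 + t ^ 2 - 2 * t * c) - mu ^ 2 * (1 - t * c) ^ 2.
Proof. unfold Pc; ring. Qed.

Lemma cubic_uniq (mu t a b : R) : 0 < t -> 0 < mu < 1 -> 0 <= a -> a < b -> b <= mu ->
  Pc mu t a = 0 -> Pc mu t b = 0 -> False.
Proof.
  intros ht hmu ha hab hb Pa Pb.
  set (A := -2 * t). set (B := 1 + t ^ 2 - mu ^ 2 * t ^ 2). set (C := 2 * mu ^ 2 * t).
  set (Q := A * (a*a + a*b + b*b) + B * (a + b) + C).
  set (K := B + A * (a + b)).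
  assert (HQ : Q * (b - a) = Pc mu t b - Pc mu t a) by (unfold Q, A, B, C, Pc; ring).
  assert (Q0 : Q = 0).
  { rewrite Pa, Pb, Rminus_0_r in HQ. apply Rmult_integral in HQ. destruct HQ; [auto|lra]. }
  assert (Hid : forall c, Pc mu t c = (c - a) * (c - b) * (A * c + K) + Pc mu t a + (c - a) * Q)
    by (intro c; unfold Q, K, A, B, C, Pc; ring).
  assert (H0 := Hid 0). assert (Hm := Hid mu).
  rewrite Pa, Q0 in H0, Hm.
  assert (P0 : Pc mu t 0 = - mu ^ 2) by (unfold Pc; ring).
  assert (Pm : Pc mu t mu = mu ^ 2 * t ^ 2 * (1 - mu ^ 2)) by (unfold Pc; ring).
  assert (hab0 : 0 <= a * b) by nra.
  assert (hK : K < 0).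
  { destruct (Rlt_or_le K 0) as [h|h]; auto.
    assert (0 <= a * b * K) by nra. nra. }
  assert (hA : A < 0) by (unfold A; lra).
  assert (0 <= (mu - a) * (mu - b)) by nra.
  assert (A * mu + K < 0) by nra.
  assert ((mu - a) * (mu - b) * (A * mu + K) <= 0) by nra.
  assert (0 < mu ^ 2 * t ^ 2 * (1 - mu ^ 2)).
  { apply Rmult_lt_0_compat; [|nra]. apply Rmult_lt_0_compat; apply pow_lt; lra. }
  lra.
Qed.

Lemma root_Pc (mu t th : R) : exit_eq mu t th = 0 -> Pc mu t (cos th) = 0.
Proof.
  unfold exit_eq. intro h. rewrite Pc_id.
  set (c := cos th) in *.
  assert (X : 0 <= 1 + t ^ 2 - 2 * t * c).
  { assert (-1 <= c <= 1) by (unfold c; split; [apply COS_bound|apply COS_bound]).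
    assert (0 <= (t - c) ^ 2) by apply pow2_ge_0. nra. }
  assert (hs := sqrt_sqrt _ X).
  set (s := sqrt (1 + t ^ 2 - 2 * t * c)) in *.
  assert (e : s * c = mu * (1 - t * c)) by lra.
  rewrite <- hs.
  transitivity ((s * c) ^ 2 - mu ^ 2 * (1 - t * c) ^ 2); [ring|]. rewrite e. ring.
Qed.

Lemma acos_facts (mu : R) : 0 < mu < 1 -> 0 < acos mu < PI / 2.
Proof.
  intros hmu.
  assert (hc : cos (acos mu) = mu) by (apply cos_acos; lra).
  destruct (acos_bound mu) as [h1 h2].
  split.
  - destruct h1 as [h1|h1]; auto. rewrite <- h1, cos_0 in hc. lra.
  - destruct (Rtotal_order (acos mu) (PI / 2)) as [h|[h|h]]; auto.
    + rewrite h, cos_PI2 in hc. lra.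
    + assert (cos (acos mu) < 0) by (apply cos_lt_0; lra). lra.
Qed.

Lemma cos_range (mu th : R) : 0 < mu < 1 -> acos mu <= th <= PI / 2 ->
  0 <= cos th <= mu.
Proof.
  intros hmu hth. pose proof (acos_facts mu hmu). pose proof PI_RGT_0.
  split.
  - apply cos_ge_0; lra.
  - rewrite <- (cos_acos mu) by lra. apply cos_decr_1; lra.
Qed.

Lemma cont_f (mu t : R) : continuity (fun th => - exit_eq mu t th).
Proof.
  intro x. unfold exit_eq.
  set (g := fun th => 1 + t ^ 2 - 2 * t * cos th).
  change (continuity_pt (- ((fct_cte (mu * t) + comp sqrt g) * cos - fct_cte mu))%F x).
  apply continuity_pt_opp. apply continuity_pt_minus; [|apply continuity_pt_const; intros ? ?; reflexivity].
  apply continuity_pt_mult; [|apply continuity_cos].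
  apply continuity_pt_plus; [apply continuity_pt_const; intros ? ?; reflexivity|].
  apply continuity_pt_comp.
  - unfold g. change (continuity_pt (fct_cte (1 + t ^ 2) - fct_cte (2 * t) * cos)%F x).
    apply continuity_pt_minus; [apply continuity_pt_const; intros ? ?; reflexivity|].
    apply continuity_pt_mult; [apply continuity_pt_const; intros ? ?; reflexivity|apply continuity_cos].
  - apply continuity_pt_sqrt. unfold g.
    assert (-1 <= cos x <= 1) by (split; [apply COS_bound|apply COS_bound]).
    assert (0 <= (t - cos x) ^ 2) by apply pow2_ge_0. nra.
Qed.

Theorem proposition1 (mu : R) (hmu : 0 < mu < 1) :
  (forall t : R, 0 < t ->
     exists! th : R, acos mu <= th <= PI / 2 /\ exit_eq mu t th = 0)
  /\
  (forall theta_exit : R -> R,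
     (forall t : R, 0 < t ->
        acos mu <= theta_exit t <= PI / 2 /\ exit_eq mu t (theta_exit t) = 0) ->
     forall eps : R, 0 < eps ->
       exists M : R, 0 < M /\
         forall t : R, M < t -> Rabs (theta_exit t - PI / 2) < eps).
Proof.
  pose proof (acos_facts mu hmu) as hac. pose proof PI_RGT_0 as hpi.
  split.
  - intros t ht.
    assert (fa : 0 < exit_eq mu t (acos mu)).
    { unfold exit_eq. rewrite cos_acos by lra.
      assert (X : 0 < 1 + t ^ 2 - 2 * t * mu).
      { assert (0 <= (t - mu) ^ 2) by apply pow2_ge_0. nra. }
      assert (hs := sqrt_sqrt _ (Rlt_le _ _ X)).
      assert (hs0 := sqrt_pos (1 + t ^ 2 - 2 * t * mu)).
      set (s := sqrt (1 + t ^ 2 - 2 * t * mu)) in *.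
      assert (mu * t + s > 1).
      { destruct (Rlt_or_le (mu * t + s) 1) as [h|h]; [|].
        - assert (s * s < (1 - mu * t) * (1 - mu * t)) by nra.
          assert (0 < t ^ 2 * (1 - mu ^ 2)) by (apply Rmult_lt_0_compat; [apply pow_lt|]; nra).
          nra.
        - destruct h as [h|h]; [lra|].
          assert (s * s = (1 - mu * t) * (1 - mu * t)) by (replace s with (1 - mu*t) by lra; ring).
          assert (0 < t ^ 2 * (1 - mu ^ 2)) by (apply Rmult_lt_0_compat; [apply pow_lt|]; nra).
          nra. }
      nra. }
    assert (fb : exit_eq mu t (PI / 2) < 0).
    { unfold exit_eq. rewrite cos_PI2. lra. }
    destruct (IVT (fun th => - exit_eq mu t th) (acos mu) (PI / 2) (cont_f mu t))
      as [z [hz1 hz2]]; [lra|simpl; lra|simpl; lra|].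
    exists z. split; [split; [auto|lra]|].
    intros y [hy1 hy2].
    assert (ez : exit_eq mu t z = 0) by lra.
    apply cos_inj; try lra.
    pose proof (cos_range mu z hmu hz1). pose proof (cos_range mu y hmu hy1).
    pose proof (root_Pc _ _ _ ez). pose proof (root_Pc _ _ _ hy2).
    destruct (Rtotal_order (cos z) (cos y)) as [h|[h|h]]; auto.
    + exfalso. apply (cubic_uniq mu t (cos z) (cos y)); tauto || lra.
    + exfalso. apply (cubic_uniq mu t (cos y) (cos z)); tauto || lra.
  - intros th Hth eps heps.
    destruct (Rlt_or_le eps (PI / 2)) as [he|he].
    + assert (hse : 0 < sin eps) by (apply sin_gt_0; lra).
      exists (/ sin eps). split; [apply Rinv_0_lt_compat; auto|].
      intros t ht.
      assert (t0 : 0 < t).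
      { apply Rlt_trans with (/ sin eps); auto. apply Rinv_0_lt_compat; auto. }
      destruct (Hth t t0) as [hr he0].
      pose proof (cos_range mu _ hmu hr) as hc.
      assert (hct : cos (th t) * t <= 1).
      { unfold exit_eq in he0.
        pose proof (sqrt_pos (1 + t ^ 2 - 2 * t * cos (th t))). nra. }
      assert (t * sin eps > 1).
      { apply Rmult_lt_compat_r with (r := sin eps) in ht; auto.
        rewrite Rinv_l in ht; lra. }
      assert (hlt : cos (th t) < sin eps) by nra.
      assert (PI / 2 - eps < th t).
      { destruct (Rlt_or_le (PI / 2 - eps) (th t)) as [h|h]; auto.
        assert (cos (PI / 2 - eps) <= cos (th t)) by (apply cos_decr_1; lra).
        rewrite cos_shift in H0. lra. }
      rewrite Rabs_left1; lra.
    + exists 1. split; [lra|]. intros t ht.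
      destruct (Hth t ltac:(lra)) as [hr _].
      rewrite Rabs_left1; lra.
Qed.
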